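(* Let $\mathcal{A}$ be an association scheme with splitting field $L$ and Krein field $K$, and let $\sigma\in\mathrm{Gal}(L/\mathbb{Q})$. Then the map $\hat\sigma$ on $L[\mathcal{A}]$, defined by $M^{\hat\sigma}=\sum_ja_jE_j^\sigma$ for $M=\sum_ja_jE_j$, is a Bose–Mesner algebra automorphism of $L[\mathcal{A}]$ if and only if $\sigma$ fixes every element of $K$, i.e. $\sigma\in\mathrm{Gal}(L/K)$.
   Context: An association scheme on $v$ vertices is a set $\mathcal{A}=\{A_0,\ldots,A_d\}$ of $v\times v$ $(0,1)$-matrices with $A_0=I$, $\sum_iA_i=J$, closed under transpose, pairwise commuting, and with all products $A_iA_j$ in the span of $\mathcal{A}$. Its principal idempotents are the pairwise orthogonal Hermitian idempotents $E_0,\ldots,E_d$ summing to $I$ that form a basis of the span, with $A_iE_j=p_i(j)E_j$; the splitting field is $L=\mathbb{Q}(p_i(j):i,j)$ and $L[\mathcal{A}]$ is the $L$-span of $\mathcal{A}$. The Krein parameters $q_{ij}(k)$ are defined by $E_i\circ E_j=\frac1v\sum_kq_{ij}(k)E_k$ ($\circ$ the Schur product), and the Krein field $K$ is $\mathbb{Q}$ adjoined all Krein parameters (it is a subfield of $L$). For $\sigma\in\mathrm{Gal}(L/\mathbb{Q})$, $M^\sigma$ denotes entrywise application of $\sigma$; it permutes $\{E_0,\ldots,E_d\}$. A Bose–Mesner algebra automorphism of $L[\mathcal{A}]$ is an invertible $L$-linear map $\psi$ with $(MN)^\psi=M^\psi N^\psi$, $(M\circ N)^\psi=M^\psi\circ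 N^\psi$ and $(M^* )^\psi=(M^\psi)^*$. *)

(* Defs.v *)
From HB Require Import structures.
From mathcomp Require Import all_boot all_order all_algebra all_field.
Set Implicit Arguments. Unset Strict Implicit. Unset Printing Implicit Defensive.
Import Order.TTheory GRing.Theory Num.Theory.
Local Open Scope ring_scope.

(* All matrices are v x v matrices over algC (complex algebraic numbers);
   the classes / idempotents are indexed by 'I_d.+1 (index 0 = A_0 = I). *)

Definition in_span (v d : nat) (F : 'I_d.+1 -> 'M[algC]_v) (M : 'M[algC]_v) : Prop :=
  exists c : 'I_d.+1 -> algC, M = \sum_k c k *: F k.

Definition conjT (v : nat) (M : 'M[algC]_v) : 'M[algC]_v := (map_mx (@Num.conj algC) M)^T.

Definition schur (v : nat) (M N : 'M[algC]_v) : 'M[algC]_v :=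
  \matrix_(i, j) (M i j * N i j).

Definition assoc_scheme (v d : nat) (A : 'I_d.+1 -> 'M[algC]_v) : Prop :=
  [/\ (forall i x y, A i x y = 0 \/ A i x y = 1),
      A ord0 = 1%:M,
      \sum_i A i = const_mx 1,
      (forall i, exists j, (A i)^T = A j) &
      (forall i j, A i *m A j = A j *m A i /\ in_span A (A i *m A j))].

Definition principal_idempotents (v d : nat) (A E : 'I_d.+1 -> 'M[algC]_v) : Prop :=
  [/\ (forall i j, E i *m E j = if i == j then E i else 0),
      (forall i, conjT (E i) = E i),
      \sum_i E i = 1%:M,
      (forall i, in_span A (E i) /\ in_span E (A i)) &
      (forall c : 'I_d.+1 -> algC, \sum_j c j *: E j = 0 -> forall j, c j = 0)].

Definition eigenvalues (v d : nat) (A E : 'I_d.+1 -> 'M[algC]_v)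
  (p : 'I_d.+1 -> 'I_d.+1 -> algC) : Prop :=
  forall i j, A i *m E j = p i j *: E j.

Definition krein_params (v d : nat) (E : 'I_d.+1 -> 'M[algC]_v)
  (q : 'I_d.+1 -> 'I_d.+1 -> 'I_d.+1 -> algC) : Prop :=
  forall i j, schur (E i) (E j) = (v%:R)^-1 *: \sum_k q i j k *: E k.

Definition gen_field (S : algC -> Prop) (x : algC) : Prop :=
  forall P : {pred algC}, divring_closed P -> (forall y, S y -> y \in P) -> x \in P.

Definition splitting_field (d : nat) (p : 'I_d.+1 -> 'I_d.+1 -> algC) : algC -> Prop :=
  gen_field (fun x => exists i j, x = p i j).

Definition krein_field (d : nat) (q : 'I_d.+1 -> 'I_d.+1 -> 'I_d.+1 -> algC)
  : algC -> Prop :=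
  gen_field (fun x => exists i j k, x = q i j k).

Definition LspanA (v d : nat) (L : algC -> Prop) (A : 'I_d.+1 -> 'M[algC]_v)
  (M : 'M[algC]_v) : Prop :=
  exists a : 'I_d.+1 -> algC, (forall i, L (a i)) /\ M = \sum_i a i *: A i.

(* The map sigma-hat: for M = sum_j a_j E_j, M^hat = sum_j a_j E_j^sigma.
   The coordinate a_j of M in the basis E is recovered as
   tr(M E_j) / tr(E_j) (since M E_j = a_j E_j and tr E_j = rank E_j <> 0). *)
Definition sigma_hat (v d : nat) (sigma : algC -> algC) (E : 'I_d.+1 -> 'M[algC]_v)
  (M : 'M[algC]_v) : 'M[algC]_v :=
  \sum_j (\tr (M *m E j) / \tr (E j)) *: map_mx sigma (E j).

Definition BM_automorphism (v : nat) (L : algC -> Prop) (S : 'M[algC]_v -> Prop)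
  (psi : 'M[algC]_v -> 'M[algC]_v) : Prop :=
  (forall M, S M -> S (psi M)) /\
  (forall M N, S M -> S N -> psi M = psi N -> M = N) /\
  (forall N, S N -> exists M, S M /\ psi M = N) /\
  (forall c M N, L c -> S M -> S N -> psi (c *: M + N) = c *: psi M + psi N) /\
  (forall M N, S M -> S N -> psi (M *m N) = psi M *m psi N) /\
  (forall M N, S M -> S N -> psi (schur M N) = schur (psi M) (psi N)) /\
  (forall M, S M -> psi (conjT M) = conjT (psi M)).

(* Main.v *)
Require Import Defs.
From HB Require Import structures.
From mathcomp Require Import all_boot all_order all_algebra all_field.
Set Implicit Arguments. Unset Strict Implicit. Unset Printing Implicit Defensive.
Import Order.TTheory GRing.Theory Num.Theory.
Local Open Scope ring_scope.

Definition Qk (Q : {pred algC}) (hQ : divring_closed Q) : {pred algC} := Q.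
HB.instance Definition _ (Q : {pred algC}) (hQ : divring_closed Q) :=
  GRing.isDivringClosed.Build algC (Qk hQ) hQ.

Lemma det_in (Q : {pred algC}) (hQ : divring_closed Q) n (M : 'M[algC]_n) :
  (forall i j, M i j \in Qk hQ) -> \det M \in Qk hQ.
Proof.
move=> hM; rewrite /determinant; apply: rpred_sum => s _.
by rewrite rpredM ?rpredX ?rpredN ?rpred1 // rpred_prod.
Qed.

Lemma invmx_in (Q : {pred algC}) (hQ : divring_closed Q) n (M : 'M[algC]_n) :
  (forall i j, M i j \in Qk hQ) -> forall i j, invmx M i j \in Qk hQ.
Proof.
move=> hM i j; rewrite /invmx; case: ifP => _ //.
rewrite !mxE rpredM ?rpredV ?det_in // /cofactor rpredM ?rpredX ?rpredN ?rpred1 //.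
by apply: det_in => k l; rewrite !mxE.
Qed.

Lemma gen_in (G : algC -> Prop) x (Q : {pred algC}) (hQ : divring_closed Q) :
  gen_field G x -> (forall y, G y -> y \in Q) -> x \in Qk hQ.
Proof. by move=> hx hG; apply: hx. Qed.

Lemma gen_gen (G : algC -> Prop) x : G x -> gen_field G x.
Proof. by move=> hx Q _ hG; apply: hG. Qed.

Lemma gen_add (G : algC -> Prop) x y : gen_field G x -> gen_field G y -> gen_field G (x + y).
Proof. move=> hx hy Q hQ hG; have : x + y \in Qk hQ by rewrite rpredD ?(gen_in hQ hx) ?(gen_in hQ hy). by []. Qed.

Lemma gen_mul (G : algC -> Prop) x y : gen_field G x -> gen_field G y -> gen_field G (x * y).
Proof. move=> hx hy Q hQ hG; have : x * y \in Qk hQ by rewrite rpredM ?(gen_in hQ hx) ?(gen_in hQ hy). by []. Qed.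

Lemma gen_sum (G : algC -> Prop) (I : finType) (F : I -> algC) :
  (forall i, gen_field G (F i)) -> gen_field G (\sum_i F i).
Proof.
move=> hF Q hQ hG; have : \sum_i F i \in Qk hQ by apply: rpred_sum => i _; apply: gen_in (hF i) hG.
by [].
Qed.


Lemma gen_morph (G : algC -> Prop) (s : {rmorphism algC -> algC}) x :
  (forall y, G y -> gen_field G (s y)) -> gen_field G x -> gen_field G (s x).
Proof.
move=> hs hx Q hQ hG.
pose Q' : {pred algC} := [pred y | s y \in Q].
have hQ' : divring_closed Q'.
  split; rewrite /Q' ?inE ?rmorph1.
  - by have : 1 \in Qk hQ by rewrite rpred1.
  - move=> a b; rewrite !inE => ha hb; rewrite rmorphB.
    by have : s a - s b \in Qk hQ by rewrite rpredB.
  - move=> a b; rewrite !inE => ha hb; rewrite fmorph_div.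
    by have : s a / s b \in Qk hQ by rewrite rpredM ?rpredV.
have := gen_in hQ' hx; rewrite /Qk /Q' inE; apply.
by move=> y /hs hy; apply: hy.
Qed.

Lemma fix_gen (G : algC -> Prop) (s : {rmorphism algC -> algC}) x :
  (forall y, G y -> s y = y) -> gen_field G x -> s x = x.
Proof.
move=> hs hx.
pose Q' : {pred algC} := [pred y | s y == y].
have hQ' : divring_closed Q'.
  split; rewrite /Q' ?inE ?rmorph1 //.
  - by move=> a b; rewrite !inE => /eqP ha /eqP hb; rewrite rmorphB ha hb.
  - by move=> a b; rewrite !inE => /eqP ha /eqP hb; rewrite fmorph_div ha hb.
have := gen_in hQ' hx; rewrite /Qk /Q' inE => h; apply/eqP; apply: h.
by move=> y /hs /eqP.
Qed.

Section Gen.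
Variables (v d : nat) (F : 'I_d.+1 -> 'M[algC]_v).

Lemma mul_comb (hF : forall i j, F i *m F j = if i == j then F i else 0) (a b : 'I_d.+1 -> algC) :
  (\sum_j a j *: F j) *m (\sum_j b j *: F j) = \sum_j (a j * b j) *: F j.
Proof.
rewrite mulmx_suml; apply: eq_bigr => i _.
rewrite mulmx_sumr (bigD1 i) //= big1 ?addr0.
  by rewrite -scalemxAl -scalemxAr hF eqxx scalerA mulrC.
by move=> j /negbTE ji; rewrite -scalemxAl -scalemxAr hF eq_sym ji !scaler0.
Qed.

Lemma comb_mul (hF : forall i j, F i *m F j = if i == j then F i else 0) (a : 'I_d.+1 -> algC) j :
  (\sum_k a k *: F k) *m F j = a j *: F j.
Proof.
rewrite mulmx_suml (bigD1 j) //= big1 ?addr0.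
  by rewrite -scalemxAl hF eqxx.
by move=> k /negbTE kj; rewrite -scalemxAl hF kj scaler0.
Qed.

Lemma indep_of_orth (hF : forall i j, F i *m F j = if i == j then F i else 0)
   (hnz : forall j, F j != 0) (c : 'I_d.+1 -> algC) :
  \sum_j c j *: F j = 0 -> forall j, c j = 0.
Proof.
move=> h j; have := comb_mul hF c j; rewrite h mul0mx => /esym/eqP.
by rewrite scalemx_eq0 (negbTE (hnz j)) orbF => /eqP.
Qed.

Lemma conjT_comb (a : 'I_d.+1 -> algC) :
  conjT (\sum_j a j *: F j) = \sum_j (a j)^* *: conjT (F j).
Proof.
apply/matrixP => x y; rewrite /conjT !mxE summxE rmorph_sum summxE.
by apply: eq_bigr => j _; rewrite !mxE rmorphM.
Qed.

Lemma schur_combl (a : 'I_d.+1 -> algC) N :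
  schur (\sum_j a j *: F j) N = \sum_j a j *: schur (F j) N.
Proof.
apply/matrixP => x y; rewrite /schur !mxE summxE mulr_suml summxE.
by apply: eq_bigr => j _; rewrite !mxE mulrA.
Qed.

Lemma schur_combr (a : 'I_d.+1 -> algC) N :
  schur N (\sum_j a j *: F j) = \sum_j a j *: schur N (F j).
Proof.
apply/matrixP => x y; rewrite /schur !mxE summxE mulr_sumr summxE.
by apply: eq_bigr => j _; rewrite !mxE mulrCA.
Qed.

End Gen.

Lemma map_schur (s : {rmorphism algC -> algC}) v (M N : 'M[algC]_v) :
  map_mx s (schur M N) = schur (map_mx s M) (map_mx s N).
Proof. by apply/matrixP => x y; rewrite !mxE rmorphM. Qed.

Lemma map_comb (s : {rmorphism algC -> algC}) v d (F : 'I_d.+1 -> 'M[algC]_v) a :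
  map_mx s (\sum_j a j *: F j) = \sum_j s (a j) *: map_mx s (F j).
Proof.
apply/matrixP => x y; rewrite !mxE summxE rmorph_sum summxE.
by apply: eq_bigr => j _; rewrite !mxE rmorphM.
Qed.

Lemma sh_comb (s : {rmorphism algC -> algC}) v d (E : 'I_d.+1 -> 'M[algC]_v)
  (hF : forall i j, E i *m E j = if i == j then E i else 0)
  (htr : forall j, \tr (E j) != 0) a :
  sigma_hat s E (\sum_j a j *: E j) = \sum_j a j *: map_mx s (E j).
Proof.
rewrite /sigma_hat; apply: eq_bigr => j _.
by rewrite comb_mul // mxtraceZ mulfK.
Qed.

Lemma sh_lin (s : {rmorphism algC -> algC}) v d (E : 'I_d.+1 -> 'M[algC]_v) c M N :
  sigma_hat s E (c *: M + N) = c *: sigma_hat s E M + sigma_hat s E N.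
Proof.
rewrite /sigma_hat scaler_sumr -big_split; apply: eq_bigr => j _ /=.
by rewrite mulmxDl -scalemxAl mxtraceD mxtraceZ mulrDl scalerDl scalerA mulrA.
Qed.

Section Scheme.
Variables (v d : nat) (A E : 'I_d.+1 -> 'M[algC]_v)
  (p : 'I_d.+1 -> 'I_d.+1 -> algC) (q : 'I_d.+1 -> 'I_d.+1 -> 'I_d.+1 -> algC)
  (sigma : {rmorphism algC -> algC}).
Hypotheses (hA : assoc_scheme A) (hE : principal_idempotents A E)
  (hp : eigenvalues A E p) (hq : krein_params E q).

Lemma Emul i j : E i *m E j = if i == j then E i else 0.
Proof. by case: hE. Qed.
Lemma Eindep (c : 'I_d.+1 -> algC) : \sum_j c j *: E j = 0 -> forall j, c j = 0.
Proof. by case: hE => _ _ _ _; apply. Qed.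
Lemma Esum : \sum_i E i = 1%:M.
Proof. by case: hE. Qed.
Lemma Eherm i : conjT (E i) = E i.
Proof. by case: hE. Qed.
Lemma Espan i : in_span A (E i).
Proof. by case: hE => _ _ _ h _; case: (h i). Qed.

Lemma Eneq0 j : E j != 0.
Proof.
apply/eqP => h.
have := @Eindep (fun k => (k == j)%:R).
rewrite (bigD1 j) //= big1 ?h ?scaler0 ?addr0; last first.
  by move=> k /negbTE ->; rewrite scale0r.
by move/(_ erefl j); rewrite eqxx => /eqP; rewrite oner_eq0.
Qed.

Lemma A_E i : A i = \sum_j p i j *: E j.
Proof.
by rewrite -[A i]mulmx1 -Esum mulmx_sumr; apply: eq_bigr => j _; apply: hp.
Qed.

Lemma trE j : \tr (E j) != 0.
Proof.
have -> : \tr (E j) = \tr (E j *m conjT (E j)) by rewrite Eherm Emul eqxx.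
apply/eqP => h0.
have h1 : forall x, \sum_y E j x y * (E j x y)^* = 0.
  move=> x; move: h0; rewrite /mxtrace.
  have -> : \sum_i (E j *m conjT (E j)) i i = \sum_i \sum_y E j i y * (E j i y)^*.
    apply: eq_bigr => i _; rewrite mxE; apply: eq_bigr => y _; by rewrite /conjT !mxE.
  move/psumr_eq0P => h; apply: h => // i _; apply: sumr_ge0 => y _; exact: mul_conjC_ge0.
apply/negP: (Eneq0 j); apply/negPn/eqP/matrixP => x y; rewrite mxE.
have /eqP := @psumr_eq0P _ _ xpredT (fun y => E j x y * (E j x y)^*)
  (fun y _ => mul_conjC_ge0 (E j x y)) (h1 x) y isT.
by rewrite mul_conjC_eq0 => /eqP.
Qed.

Lemma Amap i : map_mx sigma (A i) = A i.
Proof.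
case: hA => h01 _ _ _ _; apply/matrixP => x y; rewrite mxE.
by case: (h01 i x y) => ->; rewrite ?rmorph0 ?rmorph1.
Qed.

Local Notation Es j := (map_mx sigma (E j)).

Lemma Esmul i j : Es i *m Es j = if i == j then Es i else 0.
Proof. by rewrite -map_mxM Emul; case: eqP => // _; rewrite map_mx0. Qed.

Lemma Esneq0 j : Es j != 0.
Proof.
apply/eqP => h; apply/negP: (Eneq0 j); apply/negPn/eqP.
by apply: (map_mx_inj (f := sigma)); rewrite h map_mx0.
Qed.

Lemma Es_span j : exists b : 'I_d.+1 -> algC, Es j = \sum_k b k *: E k.
Proof.
case: (Espan j) => c ->; rewrite map_comb.
exists (fun k => \sum_i sigma (c i) * p i k).
under eq_bigr do rewrite Amap A_E scaler_sumr.
rewrite exchange_big /=; apply: eq_bigr => k _; rewrite scaler_suml.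
by apply: eq_bigr => i _; rewrite scalerA.
Qed.

Lemma EsE j l : Es j *m E l != 0 -> Es j *m E l = E l.
Proof.
case: (Es_span j) => b hb hnz.
have h1 : Es j *m E l = b l *: E l by rewrite hb comb_mul //; apply: Emul.
have idem : Es j *m Es j = Es j by rewrite Esmul eqxx.
have : Es j *m (Es j *m E l) = Es j *m E l by rewrite mulmxA idem.
rewrite h1 -scalemxAr h1 scalerA => /eqP.
rewrite -subr_eq0 -scalerBl scalemx_eq0 (negbTE (Eneq0 l)) orbF subr_eq0 => /eqP hbb.
have bl0 : b l != 0 by apply: contraNneq hnz => b0; rewrite h1 b0 scale0r.
have -> : b l = 1 by apply: (mulfI bl0); rewrite hbb mulr1.
by rewrite scale1r.
Qed.

Lemma Es_unique j j' l : Es j *m E l != 0 -> Es j' *m E l != 0 -> j = j'.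
Proof.
move=> h h'; case: (eqVneq j j') => // ne; exfalso.
have : Es j *m (Es j' *m E l) = E l by rewrite (EsE h') (EsE h).
rewrite mulmxA Esmul (negbTE ne) mul0mx => /esym/eqP.
by rewrite (negbTE (Eneq0 l)).
Qed.

Lemma Es_ex j : exists l, Es j *m E l != 0.
Proof.
have [/existsP [l hl]|/existsPn h] := boolP [exists l, Es j *m E l != 0].
  by exists l.
exfalso; apply/negP: (Esneq0 j); apply/negPn/eqP.
rewrite -[Es j]mulmx1 -Esum mulmx_sumr big1 // => l _.
by move: (h l); rewrite negbK => /eqP.
Qed.

Lemma Es_perm : exists pi : 'I_d.+1 -> 'I_d.+1, injective pi /\ forall j, Es j = E (pi j).
Proof.
have [pi hpi] := fin_all_exists Es_ex.
have inj : injective pi.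
  by move=> j j' e; apply: (Es_unique (hpi j)); rewrite e; apply: hpi.
exists pi; split => // j.
rewrite -[Es j]mulmx1 -Esum mulmx_sumr (bigD1 (pi j)) //= big1 ?addr0.
  exact: EsE (hpi j).
move=> l ne; have [g gK Kg] := injF_bij inj.
apply/eqP; apply: contraNT ne => hnz.
have := hpi (g l); rewrite Kg => h2.
by rewrite (Es_unique hnz h2) Kg.
Qed.

Local Notation L := (splitting_field p).

Lemma sigma_L x : L x -> L (sigma x).
Proof.
have [pi [_ hpi]] := Es_perm.
apply: gen_morph => y [i [j ->]].
have e : sigma (p i j) = p i (pi j).
  have := hp i j; move/(congr1 (map_mx sigma)).
  rewrite map_mxM map_mxZ Amap hpi hp => /eqP.
  rewrite -subr_eq0 -scalerBl scalemx_eq0 (negbTE (Eneq0 _)) orbF subr_eq0.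
  by move/eqP.
by rewrite e; apply: gen_gen; exists i, (pi j).
Qed.

Lemma E_coef : exists c : 'I_d.+1 -> 'I_d.+1 -> algC,
  (forall k i, L (c k i)) /\ forall k, E k = \sum_i c k i *: A i.
Proof.
have [c hc] := fin_all_exists Espan.
pose Cm : 'M[algC]_d.+1 := \matrix_(k, i) c k i.
pose Pm : 'M[algC]_d.+1 := \matrix_(i, j) p i j.
have CP : Cm *m Pm = 1%:M.
  apply/matrixP => k j; rewrite !mxE.
  have h : \sum_l ((\sum_i c k i * p i l) - (k == l)%:R) *: E l = 0.
    under eq_bigr do rewrite scalerBl.
    have eB : \sum_l (k == l)%:R *: E l = E k.
      rewrite (bigD1 k) //= big1 ?addr0 ?eqxx ?scale1r // => l lk.
      by rewrite eq_sym (negbTE lk) scale0r.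
    rewrite sumrB eB; apply/eqP; rewrite subr_eq0; apply/eqP.
    rewrite [RHS]hc.
    under eq_bigr do rewrite scaler_suml.
    rewrite exchange_big /=; apply: eq_bigr => i _.
    by rewrite A_E scaler_sumr; apply: eq_bigr => l _; rewrite scalerA.
  have /eqP := Eindep h j; rewrite subr_eq0 => /eqP <-.
  by apply: eq_bigr => i _; rewrite !mxE.
have [_ Pu] := mulmx1_unit CP.
have CE : Cm = invmx Pm by rewrite -[Cm]mulmx1 -(mulmxV Pu) mulmxA CP mul1mx.
exists c; split => // k i Q hQ hG.
have : invmx Pm k i \in Qk hQ.
  by apply: invmx_in => a b; rewrite mxE; apply: hG; exists a, b.
by rewrite -CE mxE.
Qed.

Lemma E_S (f : 'I_d.+1 -> 'I_d.+1) (a : 'I_d.+1 -> algC) :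
  (forall j, L (a j)) -> LspanA L A (\sum_j a j *: E (f j)).
Proof.
move=> ha; have [c [hcL hc]] := E_coef.
exists (fun i => \sum_j a j * c (f j) i); split.
  by move=> i; rewrite /splitting_field; apply: gen_sum => j; apply: gen_mul; [apply: ha | apply: hcL].
under eq_bigr do rewrite hc scaler_sumr.
rewrite exchange_big /=; apply: eq_bigr => i _; rewrite scaler_suml.
by apply: eq_bigr => j _; rewrite scalerA.
Qed.

Lemma S_E M : LspanA L A M -> exists a, (forall j, L (a j)) /\ M = \sum_j a j *: E j.
Proof.
case=> al [hal ->]; exists (fun j => \sum_i al i * p i j); split.
  by move=> j; rewrite /splitting_field; apply: gen_sum => i; apply: gen_mul; [apply: hal | apply: gen_gen; exists i, j].
under eq_bigr do rewrite A_E scaler_sumr.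
rewrite exchange_big /=; apply: eq_bigr => j _; rewrite scaler_suml.
by apply: eq_bigr => i _; rewrite scalerA.
Qed.

Lemma E_in_S k : LspanA L A (E k).
Proof. have [c [hcL hc]] := E_coef; exists (c k); split => //. Qed.

Lemma vneq0 : v != 0%N.
Proof.
apply/eqP => v0; apply/negP: (Eneq0 ord0); apply/negPn/eqP.
by apply/matrixP => [[x hx]]; exfalso; rewrite v0 in hx.
Qed.

Local Notation sh := (sigma_hat sigma E).

Lemma shE k : sh (E k) = Es k.
Proof.
have := @sh_comb sigma v d E Emul trE (fun j => (j == k)%:R).
rewrite (bigD1 k) //= big1 ?addr0; last by move=> j /negbTE ->; rewrite scale0r.
rewrite (bigD1 k) //= big1 ?addr0; last by move=> j /negbTE ->; rewrite scale0r.
by rewrite eqxx !scale1r.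
Qed.

Lemma sh0 : sh 0 = 0.
Proof. by rewrite /sigma_hat big1 // => j _; rewrite mul0mx mxtrace0 mul0r scale0r. Qed.

Lemma sh_sumZ (F : 'I_d.+1 -> 'M[algC]_v) a :
  sh (\sum_i a i *: F i) = \sum_i a i *: sh (F i).
Proof.
apply: (big_rec2 (fun x y => sh x = y)); first exact: sh0.
by move=> i x y _ <-; rewrite sh_lin.
Qed.

Lemma key1 i j : sh (schur (E i) (E j)) = \sum_k ((v%:R)^-1 * q i j k) *: Es k.
Proof.
rewrite hq scaler_sumr; under eq_bigr do rewrite scalerA.
by rewrite (@sh_comb sigma v d E Emul trE).
Qed.

Lemma key2 i j : schur (Es i) (Es j) = \sum_k sigma ((v%:R)^-1 * q i j k) *: Es k.
Proof.
rewrite -map_schur hq scaler_sumr -map_comb; congr (map_mx sigma _).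
by apply: eq_bigr => k _; rewrite scalerA.
Qed.


Lemma Es_indep (c : 'I_d.+1 -> algC) : \sum_j c j *: Es j = 0 -> forall j, c j = 0.
Proof. by apply: indep_of_orth; [apply: Esmul | apply: Esneq0]. Qed.

Lemma Es_eq (a b : 'I_d.+1 -> algC) : \sum_j a j *: Es j = \sum_j b j *: Es j -> forall j, a j = b j.
Proof.
move=> h j; apply/eqP; rewrite -subr_eq0; apply/eqP; move: j; apply: Es_indep.
by under eq_bigr do rewrite scalerBl; rewrite sumrB h subrr.
Qed.

Lemma main_thm :
  BM_automorphism L (LspanA L A) sh <-> (forall x, krein_field q x -> sigma x = x).
Proof.
have vinv : (v%:R : algC)^-1 != 0 by rewrite invr_eq0 pnatr_eq0 vneq0.
split.
  move=> [_ [_ [_ [_ [_ [hsch _]]]]]] x hx.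
  apply: fix_gen hx => y [i [j [k ->]]].
  have := hsch _ _ (E_in_S i) (E_in_S j).
  rewrite key1 !shE key2 => /Es_eq/(_ k).
  rewrite rmorphM fmorphV rmorph_nat => /(mulfI vinv).
  by move=> <-.
move=> hK.
have hq' : forall i j k, sigma (q i j k) = q i j k.
  by move=> i j k; apply: hK; apply: gen_gen; exists i, j, k.
have keq : forall i j, sh (schur (E i) (E j)) = schur (Es i) (Es j).
  move=> i j; rewrite key1 key2; apply: eq_bigr => k _.
  by rewrite rmorphM fmorphV rmorph_nat hq'.
have [pi [inj hpi]] := Es_perm.
have shc : forall a, sh (\sum_j a j *: E j) = \sum_j a j *: Es j.
  by move=> a; apply: (@sh_comb sigma v d E Emul trE).
split.
  move=> M /S_E [a [ha ->]]; rewrite shc.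
  under eq_bigr do rewrite hpi.
  exact: E_S.
split.
  move=> M N /S_E [a [ha ->]] /S_E [b [hb ->]]; rewrite !shc => /Es_eq h.
  by apply: eq_bigr => j _; rewrite h.
split.
  move=> N /S_E [b [hb ->]].
  exists (\sum_j b (pi j) *: E j); split.
    by apply: (@E_S id (fun j => b (pi j))).
  rewrite shc; under eq_bigr do rewrite hpi.
  by rewrite [RHS](reindex_inj inj).
split.
  by move=> c M N _ _ _; apply: sh_lin.
split.
  move=> M N /S_E [a [ha ->]] /S_E [b [hb ->]].
  by rewrite mul_comb ?shc ?mul_comb //; [apply: Esmul | apply: Emul].
split.
  move=> M N /S_E [a [ha ->]] /S_E [b [hb ->]].
  rewrite !shc schur_combl sh_sumZ schur_combl; apply: eq_bigr => i _; congr (_ *: _).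
  rewrite schur_combr sh_sumZ schur_combr; apply: eq_bigr => j _; congr (_ *: _).
  exact: keq.
move=> M /S_E [a [ha ->]].
rewrite conjT_comb; under eq_bigr do rewrite Eherm.
rewrite !shc (conjT_comb (fun j => map_mx sigma (E j))); apply: eq_bigr => j _. by rewrite hpi Eherm.
Qed.

End Scheme.

Theorem theorem4p2 (v d : nat) (A E : 'I_d.+1 -> 'M[algC]_v)
  (p : 'I_d.+1 -> 'I_d.+1 -> algC) (q : 'I_d.+1 -> 'I_d.+1 -> 'I_d.+1 -> algC)
  (sigma : {rmorphism algC -> algC}) :
  assoc_scheme A -> principal_idempotents A E -> eigenvalues A E p ->
  krein_params E q ->
  BM_automorphism (splitting_field p) (LspanA (splitting_field p) A)
    (sigma_hat sigma E)
  <-> (forall x, krein_field q x -> sigma x = x).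
Proof. by move=> hA hE hp hq; apply: main_thm. Qed.
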